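(* Consider a system in general triangular form (GTF) with states $z^1,\dots,z^n$, drift vector field \[ a = \sum_{i=1}^{k_1-1} z^{i+1}\partial_{z^i} + \sum_{i=k_1+1}^{k_1+k_2-1} z^{i+1}\partial_{z^i} + \sum_{l=k_1+k_2}^{n-1} a^l\,\partial_{z^l}, \] and input vector fields $b_1 = \partial_{z^{k_1}} + \sum_{l=k_1+k_2}^{n-1} b^l\,\partial_{z^l}$, $b_2 = \partial_{z^n}$. Define $D_0=0$, $D_1 = \mathrm{span}\{b_1,b_2\}$ and $D_{i+1} = D_i + [a,D_i]$ for $i=1,\dots,p$, and assume that $D_1,\dots,D_p$ are involutive and $D_{p+1}$ is non-involutive. Assume further that $D_{p-1}\subset D_p\subset D_{p+1}$ with corank $2$ at each inclusion, that $D_p\not\subset \mathcal{C}(D_{p+1})$, that $[a,D_{p-1}]\subset D_p$ and $D_{p+1} = D_p + [a,D_p]$. Then $v_c := \partial_{z^{n-(p-1)}}$ is a valid choice of the vector field $v_c$ in the following sense: with $v_1 = \mathrm{ad}_a^{p-1} b_1$ and $v_2 = \partial_{z^{n-(p-1)}}$ one has $D_p = D_{p-1} + \mathrm{span}\{v_1,v_2\}$, and $(\alpha^1,\alpha^2) = (0,1)$ is a nontrivial solution of \[ (\alpha^1)^2[v_1,[v_1,a]] + 2\alpha^1\alpha^2[v_1,[v_2,a]] + (\alpha^2)^2[v_2,[v_2,a]] \in D_{p+1}, \] so that $v_c = \alpha^1 v_1 + \alpha^2 v_2 = \partial_{z^{n-(p-1)}}$ is a candidate vector field $v_c\in D_p$,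 $v_c\notin D_{p-1}$, for which $H_1 = D_{p-1}+\mathrm{span}\{v_c\}$ and $H_2 = D_p + \mathrm{span}\{[a,v_c]\}$ could satisfy $H_1\subset\mathcal{C}(H_2)$.
   Context: The general triangular form (GTF) with integers $k_1,k_2\ge1$, $k_1+k_2\le n$, states $z^1,\dots,z^n$ and inputs $v^1,v^2$ is $\dot z = a(z) + b_1(z)v^1 + b_2(z)v^2$ with $a,b_1,b_2$ as in the claim, i.e. $\dot z^i = z^{i+1}$ ($i=1,\dots,k_1-1$), $\dot z^{k_1}=v^1$, $\dot z^i = z^{i+1}$ ($i=k_1+1,\dots,k_1+k_2-1$), $\dot z^l = a^l(z^1,\dots,z^{l+1}) + b^l(z^1,\dots,z^{l+1})v^1$ ($l=k_1+k_2,\dots,n-1$), $\dot z^n = v^2$, where $b^{k_1+k_2}\neq0$ and for each $l$, $\partial_{z^{l+1}}a^l\ne0$ or $\partial_{z^{l+1}}b^l\ne0$. All objects are smooth, distributions have locally constant rank, statements are local at generic points. $[v,w]$ is the Lie bracket; $\mathrm{ad}_a b = [a,b]$, $\mathrm{ad}_a^{i} b = [a,\mathrm{ad}_a^{i-1}b]$, $\mathrm{ad}_a^0 b = b$; for distributions, $[D_1,D_2]$ is the span of brackets of their basis vector fields and $[v,D]$ the span of brackets of $v$ with basis fields of $D$. The Cauchy characteristic distribution $\mathcal{C}(D)$ is spanned by all $v\in D$ with $[v,D]\subset D$. ''Corank $2$'' for $D\subset D'$ means $\dim D' - \dim D = 2$. *)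

(* Defs.v *)
From HB Require Import structures.
From mathcomp Require Import all_boot all_order all_algebra.
From mathcomp Require Import all_classical all_reals all_analysis.
Set Implicit Arguments. Unset Strict Implicit. Unset Printing Implicit Defensive.
Import Order.TTheory GRing.Theory Num.Theory.
Import numFieldNormedType.Exports.
Local Open Scope classical_set_scope.
Local Open Scope ring_scope.

Section GTF.
Variables (R : realType) (n : nat).

Definition pt := 'rV[R]_n.
Definition vf := pt -> pt.

(* 1-based coordinate z^j of a point (0 if j is out of range) *)
Definition zc (x : pt) (j : nat) : R :=
  oapp (fun t : 'I_n => x 0 t) 0 (insub j.-1).

(* unit vector / constant coordinate vector field d/dz^j (1-based j) *)
Definition coordvf (j : nat) : vf := fun _ => \row_(i < n) (i.+1 == j)%N%:R.

(* partial derivative d/dz^(i+1) of a scalar function (0-based i) *)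
Definition partial (i : 'I_n) (f : pt -> R) : pt -> R :=
  fun x => derive f x (delta_mx 0 i).
Definition partialz (j : nat) (f : pt -> R) : pt -> R :=
  fun x => derive f x (coordvf j x).

Definition smooth (f : pt -> R) : Prop :=
  forall (s : seq 'I_n) (x : pt), differentiable (foldr partial f s) x.

(* Lie bracket [v,w] = Dw.v - Dv.w  (so that [v,w]f = v(wf) - w(vf)) *)
Definition bracket (v w : vf) : vf := fun x => derive w x (v x) - derive v x (w x).

(* A distribution is given by a finite list of generating vector fields;
   its value at x is the row space of the matrix of their values. *)
Definition distr := seq vf.
Definition spanat (D : distr) (x : pt) : 'M[R]_(size D, n) :=
  \matrix_(i < size D) nth (fun _ => 0) D i x.

Definition adD (a : vf) (D : distr) : distr := map (bracket a) D.

Fixpoint Dseq (a b1 b2 : vf) (i : nat) : distr :=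
  match i with
  | 0 => [::]
  | 1 => [:: b1; b2]
  | j.+1 => Dseq a b1 b2 j ++ adD a (Dseq a b1 b2 j)
  end.

Definition involutive_on (D : distr) (U : set pt) : Prop :=
  forall v w, v \in D -> w \in D -> forall x, U x ->
    (bracket v w x <= spanat D x)%MS.

Definition characteristic (v : vf) (D : distr) (U : set pt) : Prop :=
  (forall i : 'I_n, smooth (fun x => v x 0 i)) /\
  (forall x, U x -> (v x <= spanat D x)%MS) /\
  (forall w, w \in D -> forall x, U x -> (bracket v w x <= spanat D x)%MS).

Definition subset_cauchy (D1 D2 : distr) (U : set pt) : Prop :=
  forall x, U x -> exists cs : seq vf,
    (forall c, c \in cs -> characteristic c D2 U) /\ (spanat D1 x <= spanat cs x)%MS.

(* the GTF drift a and input fields b1, b2 (indices m are 1-based) *)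
Definition gtf_a (k1 k2 : nat) (aa : nat -> pt -> R) : vf := fun x =>
  \row_(i < n) let m := i.+1 in
    if (m < k1)%N then zc x m.+1
    else if ((k1 < m) && (m < k1 + k2))%N then zc x m.+1
    else if ((k1 + k2 <= m) && (m < n))%N then aa m x
    else 0.

Definition gtf_b1 (k1 k2 : nat) (bb : nat -> pt -> R) : vf := fun x =>
  \row_(i < n) let m := i.+1 in
    if m == k1 then 1
    else if ((k1 + k2 <= m) && (m < n))%N then bb m x
    else 0.

Definition gtf_b2 : vf := coordvf n.

End GTF.

Definition rankat (R : realType) (n : nat) (D : distr R n) (x : pt R n) : nat :=
  \rank (spanat D x).

(* Main.v *)
Require Import Defs.
From HB Require Import structures.
From mathcomp Require Import all_boot all_order all_algebra.
From mathcomp Require Import all_classical all_reals all_analysis.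
Set Implicit Arguments. Unset Strict Implicit. Unset Printing Implicit Defensive.
Import Order.TTheory GRing.Theory Num.Theory.
Import numFieldNormedType.Exports.
Local Open Scope classical_set_scope.
Local Open Scope ring_scope.
From mathcomp Require Import ring zify.

Section Smooth.
Variables (R : realType) (n : nat).
Local Notation pt := (pt R n).
Local Notation partial := (@partial R n).
Local Notation smooth := (@smooth R n).
Implicit Types f g A B : pt -> R.

Lemma derive_dir_sum (f : pt -> R) x (v : pt) : differentiable f x ->
  derive f x v = \sum_i v 0 i * partial i f x.
Proof.
move=> df; rewrite deriveE // {1}(row_sum_delta v) linear_sum.
apply: eq_bigr => i _; rewrite linearZ /= /partial deriveE //.
Qed.

Lemma smooth_diff f : smooth f -> forall x, differentiable f x.
Proof. by move=> sf x; apply: (sf [::]). Qed.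

Lemma smooth_partial f i : smooth f -> smooth (partial i f).
Proof. by move=> sf s x; have := sf (rcons s i) x; rewrite foldr_rcons. Qed.

Lemma partial_cst (c : R) i : partial i (fun _ => c) = fun _ => 0.
Proof. by apply/funext => x; rewrite /partial derive_cst. Qed.

Lemma smooth_cst (c : R) : smooth (fun _ => c).
Proof.
move=> s x; suff -> : foldr partial (fun _ => c) s = fun _ => (if s is [::] then c else 0).
  exact: differentiable_cst.
elim: s => [|i s IH] //=; rewrite IH; case: s {IH} => [|? ?]; exact: partial_cst.
Qed.

Lemma derive_coord x (v : pt) t : derive (fun y : pt => y 0 t) x v = v 0 t.
Proof.
have := @derive_mx R _ 1 n id x v (@derivable_id _ _ x v).
rewrite derive_id => /(congr1 (fun M : 'M[R]_(1, n) => M 0 t)); rewrite mxE /=.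
by move=> ->.
Qed.

Lemma smooth_coord t : smooth (fun y : pt => y 0 t).
Proof.
move=> s x; case/lastP: s => [|s i] /=.
  exact: differentiable_coord.
rewrite foldr_rcons.
have -> : partial i (fun y : pt => y 0 t) = fun _ => (delta_mx 0 i : pt) 0 t.
  by apply/funext => y; rewrite /partial derive_coord.
exact: smooth_cst s x.
Qed.

Lemma partialD f g i : (forall x, differentiable f x) -> (forall x, differentiable g x) ->
  partial i (f \+ g) = partial i f \+ partial i g.
Proof.
move=> df dg; apply/funext => x; rewrite /partial /=.
by rewrite deriveD //; apply: diff_derivable.
Qed.

Lemma partialM f g i : (forall x, differentiable f x) -> (forall x, differentiable g x) ->
  partial i (f \* g) = (partial i f \* g) \+ (f \* partial i g).
Proof.
move=> df dg; apply/funext => x; rewrite /partial /=.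
rewrite deriveM //; try by apply: diff_derivable.
rewrite /GRing.scale /=; ring.
Qed.

Lemma partialN f i : (forall x, differentiable f x) ->
  partial i (fun x => - f x) = fun x => - partial i f x.
Proof.
move=> df; apply/funext => x; rewrite /partial /=.
by rewrite deriveN //; apply: diff_derivable.
Qed.

Lemma foldr_partialD A B s :
  (forall t, (size t < size s)%N -> forall x,
      differentiable (foldr partial A t) x /\ differentiable (foldr partial B t) x) ->
  foldr partial (A \+ B) s = foldr partial A s \+ foldr partial B s.
Proof.
elim: s => [|i s IH] H //=.
rewrite IH; last by move=> t lt; apply: H; apply: ltn_trans lt _.
by apply: partialD => x; have [] := H s (ltnSn _) x.
Qed.

Lemma smooth_add f g : smooth f -> smooth g -> smooth (f \+ g).
Proof.
move=> sf sg s x; rewrite foldr_partialD; last by move=> t _ y; split.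
exact: differentiableD.
Qed.

Lemma smooth_opp f : smooth f -> smooth (fun x => - f x).
Proof.
move=> sf s; elim: s => [|i s IH] x /=.
  by apply: differentiableN; apply: sf [::] x.
suff -> : foldr partial (fun x => - f x) s = fun x => - foldr partial f s x.
  by rewrite partialN //; apply: differentiableN; apply: (sf (i :: s)).
elim: s {IH} => [|j s IH] //=; rewrite IH partialN //; exact: sf.
Qed.

Lemma smooth_mul f g : smooth f -> smooth g -> smooth (f \* g).
Proof.
move=> sf sg s; move: {2}(size s) (leqnn (size s)) => N.
elim: N s f g sf sg => [|N IH] s f g sf sg.
  rewrite leqn0 => /nilP -> x /=; apply: differentiableM; exact: smooth_diff.
case/lastP: s => [|s i]; first by move=> _ x; apply: differentiableM; exact: smooth_diff.
rewrite size_rcons ltnS => le x; rewrite foldr_rcons partialM; try exact: smooth_diff.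
rewrite foldr_partialD.
  apply: differentiableD; apply: IH => //; exact: smooth_partial.
move=> t lt y; split; apply: IH => //; try exact: smooth_partial.
  by apply: leq_trans (ltnW lt) le.
by apply: leq_trans (ltnW lt) le.
Qed.

Lemma smooth_sum (I : Type) (r : seq I) (F : I -> pt -> R) :
  (forall i, smooth (F i)) -> smooth (fun x => \sum_(i <- r) F i x).
Proof.
move=> sF; elim: r => [|i r IH].
  by under eq_fun do rewrite big_nil; exact: smooth_cst.
under eq_fun do rewrite big_cons.
exact: (smooth_add (sF i) IH).
Qed.

End Smooth.

Section VF.
Variables (R : realType) (n : nat).
Local Notation pt := (pt R n).
Local Notation vf := (vf R n).
Local Notation partial := (@partial R n).
Local Notation smooth := (@smooth R n).

Definition svf (v : vf) := forall k : 'I_n, smooth (fun x => v x 0 k).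

Lemma svf_derivable (v : vf) x d : svf v -> derivable v x d.
Proof.
move=> sv; apply/derivable_mxP => i j; rewrite (ord1 i).
by apply: diff_derivable; apply: smooth_diff.
Qed.

Lemma derive_vf_comp (v : vf) x d k : svf v ->
  (derive v x d) 0 k = derive (fun y => v y 0 k) x d.
Proof. by move=> sv; rewrite derive_mx ?mxE //; apply: svf_derivable. Qed.

Lemma bracket_comp (v w : vf) x k : svf v -> svf w ->
  bracket v w x 0 k = \sum_i v x 0 i * partial i (fun y => w y 0 k) x
                      - \sum_i w x 0 i * partial i (fun y => v y 0 k) x.
Proof.
move=> sv sw; rewrite /bracket !mxE !derive_vf_comp //.
rewrite !derive_dir_sum //. all: try exact: (smooth_diff (sv k)). all: try exact: (smooth_diff (sw k)).
Qed.

Lemma bracket_comp' (v w : vf) x k : svf v -> svf w ->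
  bracket v w x 0 k = derive (fun y => w y 0 k) x (v x)
                      - derive (fun y => v y 0 k) x (w x).
Proof. by move=> sv sw; rewrite /bracket !mxE !derive_vf_comp. Qed.

Lemma svf_bracket (v w : vf) : svf v -> svf w -> svf (bracket v w).
Proof.
move=> sv sw k.
have -> : (fun x => bracket v w x 0 k) =
   (fun x => \sum_(i <- index_enum 'I_n) v x 0 i * partial i (fun y => w y 0 k) x) \+
   (fun x => - \sum_(i <- index_enum 'I_n) w x 0 i * partial i (fun y => v y 0 k) x).
  by apply: boolp.funext => x /=; rewrite bracket_comp.
apply: smooth_add; last apply: smooth_opp; apply: smooth_sum => i.
  exact: (@smooth_mul R n (fun x => v x 0 i) (partial i (fun y => w y 0 k)) (sv i) (smooth_partial _ (sw k))).
exact: (@smooth_mul R n (fun x => w x 0 i) (partial i (fun y => v y 0 k)) (sw i) (smooth_partial _ (sv k))).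
Qed.

Lemma svf_iter (a b : vf) k : svf a -> svf b -> svf (iter k (bracket a) b).
Proof. by move=> sa sb; elim: k => [|k IH] //=; apply: svf_bracket. Qed.

Lemma smooth_zc j : smooth (fun x : pt => zc x j).
Proof.
rewrite /zc; case: insubP => [t _ _|_] /=; first exact: smooth_coord.
exact: smooth_cst.
Qed.

Lemma svf_coordvf j : svf (@coordvf R n j).
Proof. by move=> k; rewrite /coordvf; under eq_fun do rewrite mxE; exact: smooth_cst. Qed.

Lemma svf_gtf_a k1 k2 (aa : nat -> pt -> R) :
  (forall l, (k1 + k2 <= l < n)%N -> smooth (aa l)) -> svf (gtf_a k1 k2 aa).
Proof.
move=> saa k.
have -> : (fun x => gtf_a k1 k2 aa x 0 k) = fun x => (if (k.+1 < k1)%N then zc x k.+2 else if (k1 < k.+1 < k1 + k2)%N then zc x k.+2 else if (k1 + k2 <= k.+1 < n)%N then aa k.+1 x else 0).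
  by apply: boolp.funext => x; rewrite /gtf_a mxE.
case: (k.+1 < k1)%N; first exact: smooth_zc.
case: (k1 < k.+1 < k1 + k2)%N; first exact: smooth_zc.
case E: (k1 + k2 <= k.+1 < n)%N; first exact: saa.
exact: smooth_cst.
Qed.

Lemma svf_gtf_b1 k1 k2 (bb : nat -> pt -> R) :
  (forall l, (k1 + k2 <= l < n)%N -> smooth (bb l)) -> svf (gtf_b1 k1 k2 bb).
Proof.
move=> sbb k.
have -> : (fun x => gtf_b1 k1 k2 bb x 0 k) = fun x => (if k.+1 == k1 then 1 else if (k1 + k2 <= k.+1 < n)%N then bb k.+1 x else 0).
  by apply: boolp.funext => x; rewrite /gtf_b1 mxE.
case: (k.+1 == k1); first exact: smooth_cst.
case E: (k1 + k2 <= k.+1 < n)%N; first exact: sbb.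
exact: smooth_cst.
Qed.

End VF.

Lemma mem_catR (T : eqType) (x : T) s1 s2 : x \in s2 -> x \in s1 ++ s2.
Proof. by rewrite mem_cat => ->; rewrite orbT. Qed.
Lemma mem_catL (T : eqType) (x : T) s1 s2 : x \in s1 -> x \in s1 ++ s2.
Proof. by rewrite mem_cat => ->. Qed.

Lemma mem_catP (T : eqType) (x : T) s1 s2 : x \in s1 ++ s2 -> x \in s1 \/ x \in s2.
Proof. by rewrite mem_cat => /orP. Qed.
Lemma mem2P (T : eqType) (x a b : T) : x \in [:: a; b] -> x = a \/ x = b.
Proof. by rewrite !inE => /orP[]/eqP; [left|right]. Qed.
Lemma mem2l (T : eqType) (a b : T) : a \in [:: a; b].
Proof. by rewrite inE eqxx. Qed.
Lemma mem2r (T : eqType) (a b : T) : b \in [:: a; b].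
Proof. by rewrite !inE eqxx orbT. Qed.

Section Span.
Variables (R : realType) (n : nat).
Local Notation pt := (pt R n).
Local Notation vf := (vf R n).
Local Notation distr := (distr R n).
Local Notation spanat := (@spanat R n).

Lemma mem_span (L : distr) (v : vf) x : v \in L -> (v x <= spanat L x)%MS.
Proof.
move=> vL; have iL : (index v L < size L)%N by rewrite index_mem.
have -> : v x = row (Ordinal iL) (spanat L x).
  by apply/rowP => k; rewrite !mxE /= nth_index.
exact: row_sub.
Qed.

Lemma span_sub (L : distr) x m (S : 'M[R]_(m, n)) :
  (forall v, v \in L -> (v x <= S)%MS) -> (spanat L x <= S)%MS.
Proof.
move=> H; apply/row_subP => i.
have -> : row i (spanat L x) = nth (fun _ => 0) L i x.
  by apply/rowP => k; rewrite !mxE.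
by apply: H; apply: mem_nth.
Qed.

Lemma span_catl (L M : distr) x : (spanat L x <= spanat (L ++ M) x)%MS.
Proof. by apply: span_sub => v vL; apply: mem_span; rewrite mem_cat vL. Qed.

Lemma span_catr (L M : distr) x : (spanat M x <= spanat (L ++ M) x)%MS.
Proof. by apply: span_sub => v vL; apply: mem_span; rewrite mem_cat vL orbT. Qed.

Lemma span_cat_sub (L M : distr) x : (spanat (L ++ M) x <= spanat L x + spanat M x)%MS.
Proof.
apply: span_sub => v; rewrite mem_cat => /orP[] vL.
  by apply: submx_trans (addsmxSl _ _); apply: mem_span.
by apply: submx_trans (addsmxSr _ _); apply: mem_span.
Qed.

Lemma rank_le_adds m1 m2 m3 (A : 'M[R]_(m1, n)) (B : 'M[R]_(m2, n)) (C : 'M[R]_(m3, n)) :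
  (A <= B + C)%MS -> (\rank A <= \rank B + \rank C)%N.
Proof.
move=> sA; apply: leq_trans (mxrankS sA) _.
by have [] := mxrank_adds_leqif B C.
Qed.

Lemma rank_cat2 (L : distr) (u w : vf) x :
  (\rank (spanat (L ++ [:: u; w]) x) <= \rank (spanat L x) + 2)%N.
Proof.
apply: leq_trans (rank_le_adds (span_cat_sub _ _ _)) _.
by rewrite leq_add2l; apply: rank_leq_row.
Qed.

Lemma rank_cat2_stall (L : distr) (u w : vf) x : (w x <= spanat L x)%MS ->
  (\rank (spanat (L ++ [:: u; w]) x) <= \rank (spanat L x) + 1)%N.
Proof.
move=> wL.
have : (spanat (L ++ [:: u; w]) x <= spanat L x + u x)%MS.
  apply: span_sub => v; rewrite mem_cat => /orP[vL|].
    by apply: submx_trans (addsmxSl _ _); apply: mem_span.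
  rewrite !inE => /orP[]/eqP->.
    exact: addsmxSr.
  exact: submx_trans (addsmxSl _ _).
move/rank_le_adds; move/leq_trans; apply.
by rewrite leq_add2l; apply: rank_leq_row.
Qed.

Variables (a b1 b2 : vf).
Local Notation D := (Dseq a b1 b2).
Local Notation u k := (iter k (bracket a) b1).
Local Notation w k := (iter k (bracket a) b2).

Lemma DSS j : D j.+2 = D j.+1 ++ adD a (D j.+1).
Proof. by []. Qed.
Lemma D1 : D 1 = [:: b1; b2].
Proof. by []. Qed.

Lemma D_mem j k : (k < j)%N -> u k \in D j /\ w k \in D j.
Proof.
elim: j k => [//|j IH] k; case: j IH => [|j] IH.
  rewrite ltnS leqn0 => /eqP ->.
  rewrite D1.
  rewrite !inE.
  rewrite !eqxx.
  split; [exact: isT | exact: orbT].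
rewrite ltnS leq_eqVlt => /orP[/eqP ->|lt].
  have [H1 H2] : u j \in D j.+1 /\ w j \in D j.+1 by apply: IH.
  rewrite DSS.
  split; apply: mem_catR.
  exact: (map_f (bracket a) H1).
  exact: (map_f (bracket a) H2).
have [H1 H2] := IH k lt.
rewrite DSS; split; apply: mem_catL; assumption.
Qed.

Lemma D_memP j v : v \in D j -> exists k, (k < j)%N /\ (v = u k \/ v = w k).
Proof.
elim: j v => [//|j IH] v; case: j IH => [|j] IH.
  by rewrite D1 => /mem2P [] ->; exists 0%N; [split; [|left]|split; [|right]].
rewrite DSS => /mem_catP [/IH [k [lt e]]|/mapP [v' /IH [k [lt e]] ->]].
  by exists k; split => //; apply: ltn_trans lt _.
by exists k.+1; split => //; case: e => ->; [left|right].
Qed.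

Lemma D_succ j x : (spanat (D j.+1) x == spanat (D j ++ [:: u j; w j]) x)%MS.
Proof.
apply/andP; split; apply: span_sub => v.
  move=> /D_memP [k [lt e]]; apply: mem_span.
  move: lt; rewrite ltnS leq_eqVlt => /orP[/eqP Ek|lt].
    rewrite Ek in e; apply: mem_catR; case: e => ->; [exact: mem2l|exact: mem2r].
  by apply: mem_catL; have [] := D_mem lt; case: e => -> .
move=> /mem_catP [/D_memP [k [lt e]]|].
  by apply: mem_span; have [] := D_mem (ltn_trans lt (ltnSn j)); case: e => ->.
by move/mem2P => [] ->; apply: mem_span; have [] := D_mem (ltnSn j).
Qed.

Lemma D_mono j x : (spanat (D j) x <= spanat (D j.+1) x)%MS.
Proof.
apply: span_sub => v /D_memP [k [lt e]]; apply: mem_span.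
by have [] := D_mem (ltn_trans lt (ltnSn j)); case: e => ->.
Qed.

Lemma adD_sub j x : (spanat (adD a (D j)) x <= spanat (D j.+1) x)%MS.
Proof.
apply: span_sub => v /mapP [v' /D_memP [k [lt e]] ->]; apply: mem_span.
have [H1 H2] := D_mem (lt : (k.+1 < j.+1)%N).
case: e => ->; [exact: H1 | exact: H2].
Qed.
End Span.

Lemma derive_const_dir (R : realType) n (f : pt R n -> R) x v :
  (forall h : R, f (h *: v + x) = f x) -> derive f x v = 0.
Proof.
move=> H; rewrite /derive.
have -> : (fun h : R => h^-1 *: ((f \o shift x) (h *: v) - f x)) = fun _ => 0.
  by apply: boolp.funext => h /=; rewrite H subrr scaler0.
exact: lim_cst.
Qed.

Lemma derive_zero_fun (R : realType) n (f : pt R n -> R) x v :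
  (forall y, f y = 0) -> derive f x v = 0.
Proof. by move=> H; apply: derive_const_dir => h; rewrite !H. Qed.

Section GTFstruct.
Variables (R : realType) (n k1 k2 : nat) (aa : nat -> pt R n -> R).
Hypothesis k2pos : (1 <= k2)%N.
Hypothesis k12n : (k1 + k2 <= n)%N.
Hypothesis saa : forall l, (k1 + k2 <= l < n)%N -> smooth (aa l).
Hypothesis dep : forall l, (k1 + k2 <= l < n)%N -> forall x y : pt R n,
     (forall j, (1 <= j <= l.+1)%N -> zc x j = zc y j) -> aa l x = aa l y.

Local Notation a := (gtf_a k1 k2 aa).
Local Notation partial := (@partial R n).

Lemma a_compE (k : 'I_n) : (fun x => a x 0 k) = fun x =>
  (if (k.+1 < k1)%N then zc x k.+2 else if (k1 < k.+1 < k1 + k2)%N then zc x k.+2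
   else if (k1 + k2 <= k.+1 < n)%N then aa k.+1 x else 0).
Proof. by apply: boolp.funext => x; rewrite /gtf_a mxE. Qed.

Lemma partial_zc (i : 'I_n) j : (j.-1 != i) -> partial i (fun x => zc x j) = fun _ => 0.
Proof.
move=> ne; apply: boolp.funext => x; rewrite /partial /zc.
case: insubP => [t _ vt|_] /=; last exact: derive_cst.
rewrite derive_coord mxE eqxx /=.
suff -> : (t == i) = false by [].
by apply/negbTE; apply: contra ne => /eqP <-; rewrite vt.
Qed.

Lemma zc_shift (x : pt R n) (h : R) (i : 'I_n) j : j.-1 != i ->
  zc (h *: delta_mx 0 i + x) j = zc x j.
Proof.
move=> ne; rewrite /zc; case: insubP => [t _ vt|_] //=.
rewrite !mxE eqxx /=.
suff -> : (t == i) = false by rewrite mulr0 add0r.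
by apply/negbTE; apply: contra ne => /eqP <-; rewrite vt.
Qed.

Lemma partial_a0 (k i : 'I_n) : ((k.+1 < i)%N \/ k.+1 = k1) ->
  partial i (fun x => a x 0 k) = fun _ => 0.
Proof.
move=> cond; rewrite a_compE.
case c1: (k.+1 < k1)%N.
  apply: partial_zc => /=; apply/eqP => E.
  move: c1 cond; rewrite -E; lia.
case c2: (k1 < k.+1 < k1 + k2)%N.
  apply: partial_zc => /=; apply/eqP => E.
  move: c2 cond; rewrite -E; lia.
case c3: (k1 + k2 <= k.+1 < n)%N; last by apply: partial_cst.
apply: boolp.funext => x; rewrite /partial; apply: derive_const_dir => h.
apply: dep => // j /andP [j1 jk].
apply: zc_shift; apply/eqP => E.
case: cond => [lt|E'].
  move: lt; rewrite -E; lia.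
move: c3; rewrite E'; lia.
Qed.

Local Notation w i := (iter i (bracket a) (@coordvf R n n)).

Lemma svf_a : svf a.
Proof. exact: svf_gtf_a. Qed.

Lemma w_struct i y (k : 'I_n) : ((k.+1 < n - i)%N \/ (k.+1 <= k1)%N) -> w i y 0 k = 0.
Proof.
elim: i y k => [|i IH] y k cond.
  rewrite /= /coordvf mxE.
  suff -> : (k.+1 == n) = false by [].
  apply/negbTE; case: cond; lia.
have sa := svf_a.
have sw : svf (w i) by apply: svf_iter => //; exact: svf_coordvf.
rewrite iterS bracket_comp' //.
rewrite derive_zero_fun; last first.
  by move=> z; apply: IH; case: cond => c; [left; lia | right].
rewrite derive_dir_sum; last by apply: smooth_diff; exact: svf_a.
rewrite big1 ?subr0 // => j _.
have [->|nz] := eqVneq (w i y 0 j) 0; first by rewrite mul0r.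
rewrite partial_a0 ?mulr0 //.
have : ~ ((j.+1 < n - i)%N \/ (j.+1 <= k1)%N).
  by move=> c; move: nz; rewrite IH // eqxx.
case: cond => c H.
  left; apply/negP => /negP; rewrite -ltnNge => lt; apply: H; left; lia.
case: (ltngtP k.+1 k1) => [lt|gt|eq]; [left|lia|by right].
apply/negP => /negP; rewrite -ltnNge => lt'; apply: H; right; lia.
Qed.

End GTFstruct.

Section Minor.
Variables (R : realType) (n : nat).
Local Notation pt := (pt R n).

Lemma diff_bsum (I : Type) (r : seq I) (F : I -> pt -> R) x :
  (forall i, differentiable (F i) x) -> differentiable (fun y => \sum_(i <- r) F i y) x.
Proof.
move=> dF; elim: r => [|i r IH].
  by under eq_fun do rewrite big_nil; exact: differentiable_cst.
under eq_fun do rewrite big_cons.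
exact: (differentiableD (dF i) IH).
Qed.

Lemma diff_bprod (I : Type) (r : seq I) (F : I -> pt -> R) x :
  (forall i, differentiable (F i) x) -> differentiable (fun y => \prod_(i <- r) F i y) x.
Proof.
move=> dF; elim: r => [|i r IH].
  by under eq_fun do rewrite big_nil; exact: differentiable_cst.
under eq_fun do rewrite big_cons.
exact: (differentiableM (dF i) IH).
Qed.

Lemma diff_det r (F : pt -> 'M[R]_r) x :
  (forall i j, differentiable (fun y => F y i j) x) ->
  differentiable (fun y => \det (F y)) x.
Proof.
move=> dF; rewrite /determinant.
apply: diff_bsum => s.
apply: (differentiableM (differentiable_cst _ _)).
by apply: diff_bprod => i; apply: dF.
Qed.

Lemma minor_exists m (A : 'M[R]_(m, n)) :
  exists (f : 'I_(\rank A) -> 'I_m) (h : 'I_(\rank A) -> 'I_n),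
    colsub h (rowsub f A) \in unitmx.
Proof.
set B := rowsub (maxrankfun A) A.
have fB : row_free B := maxrowsub_free A.
have fBt : row_full B^T by rewrite /row_full mxrank_tr; exact: fB.
exists (maxrankfun A), (fullrankfun fBt).
rewrite -unitmx_tr.
have -> : (colsub (fullrankfun fBt) B)^T = rowsub (fullrankfun fBt) B^T.
  by apply/matrixP => i j; rewrite !mxE.
exact: fullrowsub_unit.
Qed.

Lemma unit_minor_rank m r (A : 'M[R]_(m, n)) (f : 'I_r -> 'I_m) (h : 'I_r -> 'I_n) :
  colsub h (rowsub f A) \in unitmx -> (r <= \rank A)%N.
Proof.
move=> U; rewrite -{1}(mxrank_unit U).
have -> : colsub h (rowsub f A) = rowsub f A *m colsub h 1%:M.
  by rewrite mulmx_colsub mulmx1.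
apply: leq_trans (mxrankM_maxl _ _) _.
exact: mxrankS (rowsub_sub _ _).
Qed.

Lemma near_neq0 (f : pt -> R) x : differentiable f x -> f x != 0 ->
  \forall y \near x, f y != 0.
Proof. by move=> df fx; exact: (@cvgr_neq0 _ _ _ (nbhs x) _ f (f x) (differentiable_continuous df) fx). Qed.

End Minor.

Section StallCore.
Variables (R : realType) (n : nat).
Local Notation pt := (pt R n).
Local Notation vf := (vf R n).

Lemma deriv_lin (f : pt -> R) x (I : Type) (r : seq I) (c : I -> R) (v : I -> pt) :
  differentiable f x ->
  derive f x (\sum_(i <- r) c i *: v i) = \sum_(i <- r) c i * derive f x (v i).
Proof.
move=> df; rewrite deriveE // linear_sum; apply: eq_bigr => i _.
by rewrite linearZ /= deriveE.
Qed.

Lemma unit_colsub_rank r (B : 'M[R]_(r, n)) (h : 'I_r -> 'I_n) :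
  colsub h B \in unitmx -> (r <= \rank B)%N.
Proof.
move=> U; rewrite -{1}(mxrank_unit U).
have -> : colsub h B = B *m colsub h 1%:M by rewrite mulmx_colsub mulmx1.
exact: mxrankM_maxl.
Qed.

Lemma stall_core (E : distr R n) (a g : vf) (x0 : pt) :
  (forall e, e \in E -> svf e) -> svf a -> svf g ->
  (\forall y \near x0, (\rank (spanat E y) <= \rank (spanat E x0))%N /\ (g y <= spanat E y)%MS) ->
  (bracket a g x0 <= spanat (E ++ adD a E) x0)%MS.
Proof.
move=> sE sa sg Hnear.
have [f [h U0]] := minor_exists (spanat E x0).
pose ev i := nth (fun _ => 0) E (f i).
have evE i : ev i \in E by apply: mem_nth; exact: ltn_ord.
have sev i : svf (ev i) by apply: sE.
pose Mf y := colsub h (rowsub f (spanat E y)).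
have MfE y i k : Mf y i k = ev i y 0 (h k) by rewrite !mxE.
have dMf y i k : differentiable (fun z => Mf z i k) y.
  have -> : (fun z => Mf z i k) = (fun z => ev i z 0 (h k)).
    by apply: boolp.funext => z; rewrite MfE.
  exact: smooth_diff (sev i (h k)) y.
have ddet : differentiable (fun y => \det (Mf y)) x0 by apply: diff_det => i k; exact: dMf.
have det0 : \det (Mf x0) != 0 by rewrite -unitfE -unitmxE.
pose d y := (\det (Mf y))^-1 *: (colsub h (g y) *m \adj (Mf y)).
have dd i : differentiable (fun y => d y 0 i) x0.
  have -> : (fun y => d y 0 i) = fun y => (\det (Mf y))^-1 *
      \sum_k (g y 0 (h k) * ((-1) ^+ (i + k) * \det (row' i (col' k (Mf y))))).
    apply: boolp.funext => y; rewrite /d !mxE; congr (_ * _).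
    by apply: eq_bigr => k _; rewrite !mxE.
  apply: differentiableM; first exact: differentiableV.
  apply: diff_bsum => k; apply: differentiableM.
    exact: smooth_diff (sg (h k)) x0.
  apply: (differentiableM (differentiable_cst _ _)).
  apply: diff_det => p q.
  have -> : (fun y => row' i (col' k (Mf y)) p q) = (fun y => Mf y (lift i p) (lift k q)).
    by apply: boolp.funext => y; rewrite !mxE.
  exact: dMf.
have key : \forall y \near x0, g y = d y *m rowsub f (spanat E y).
  apply: filterS2 Hnear (near_neq0 ddet det0) => y [rk gy] dy.
  set Ry := rowsub f (spanat E y).
  have Uy : colsub h Ry \in unitmx by rewrite unitmxE unitfE.
  have rRy := unit_colsub_rank Uy.
  have sRy : (Ry <= spanat E y)%MS := rowsub_sub _ _.
  have sEy : (spanat E y <= Ry)%MS.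
    rewrite -(mxrank_leqif_sup sRy).2 eqn_leq mxrankS //=.
    exact: leq_trans rk rRy.
  have /submxP [c gc] := submx_trans gy sEy.
  suff -> : d y = c by [].
  rewrite /d gc -mulmx_colsub -/(Mf y) -mulmxA mul_mx_adj mul_mx_scalar scalerA.
  by rewrite mulVf // scale1r.
have gk k : \forall y \near x0, g y 0 k = \sum_i d y 0 i * ev i y 0 k.
  apply: filterS key => y ->; rewrite !mxE; apply: eq_bigr => i _; rewrite !mxE.
  by [].
have gx0 : g x0 = \sum_i d x0 0 i *: ev i x0.
  rewrite (nbhs_singleton key) mulmx_sum_row; apply: eq_bigr => i _.
  by congr (_ *: _); apply/rowP => k; rewrite !mxE.
have eqB : bracket a g x0 = \sum_i ((derive (fun y => d y 0 i) x0 (a x0)) *: ev i x0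
                                    + (d x0 0 i) *: bracket a (ev i) x0).
  apply/rowP => k; rewrite bracket_comp' // summxE.
  rewrite (near_eq_derive _ (gk k)).
  have -> : (fun y => \sum_i d y 0 i * ev i y 0 k) = \sum_i (fun y => d y 0 i * ev i y 0 k).
    by rewrite fct_sumE.
  rewrite derive_sum; last first.
    move=> i; apply: diff_derivable; apply: differentiableM; first exact: dd.
    exact: smooth_diff (sev i k) x0.
  rewrite gx0 deriv_lin; last exact: smooth_diff (sa k) x0.
  rewrite -sumrB; apply: eq_bigr => i _.
  have -> : (fun y => d y 0 i * ev i y 0 k) = (fun y => d y 0 i) * (fun y => ev i y 0 k) by [].
  rewrite deriveM; first last.
  - exact: diff_derivable (smooth_diff (sev i k) x0).
  - exact: diff_derivable (dd i).
  rewrite !mxE (derive_vf_comp x0 (a x0) k (sev i)) (derive_vf_comp x0 (ev i x0) k sa) /GRing.scale /=; ring.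
rewrite eqB; apply: summx_sub => i _; apply: addmx_sub; apply: scalemx_sub; apply: mem_span.
  by apply: mem_catL; exact: evE.
by apply: mem_catR; exact: map_f (evE i).
Qed.

End StallCore.

Section Stall.
Variables (R : realType) (n : nat).
Local Notation pt := (pt R n).
Local Notation vf := (vf R n).

Lemma rank_lsc (E : distr R n) x0 : (forall e, e \in E -> svf e) ->
  \forall y \near x0, (\rank (spanat E x0) <= \rank (spanat E y))%N.
Proof.
move=> sE.
have [f [h U0]] := minor_exists (spanat E x0).
pose Mf y := colsub h (rowsub f (spanat E y)).
have dMf y i k : differentiable (fun z => Mf z i k) y.
  have -> : (fun z => Mf z i k) = (fun z => nth (fun _ => 0) E (f i) z 0 (h k)).
    by apply: boolp.funext => z; rewrite !mxE.
  apply: smooth_diff; apply: sE; apply: mem_nth; exact: ltn_ord.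
have ddet : differentiable (fun y => \det (Mf y)) x0 by apply: diff_det => i k; exact: dMf.
have det0 : \det (Mf x0) != 0 by rewrite -unitfE -unitmxE.
apply: filterS (near_neq0 ddet det0) => y dy.
by apply: (unit_minor_rank (f := f) (h := h)); rewrite unitmxE unitfE.
Qed.

Lemma eq_rank m1 m2 (A : 'M[R]_(m1, n)) (B : 'M[R]_(m2, n)) :
  (A <= B)%MS -> (B <= A)%MS -> \rank A = \rank B.
Proof. by move=> AB BA; apply/eqP; rewrite eqn_leq !mxrankS. Qed.

Variables (a b1 b2 : vf).
Hypotheses (sa : svf a) (sb1 : svf b1) (sb2 : svf b2).
Local Notation D := (Dseq a b1 b2).
Local Notation u k := (iter k (bracket a) b1).
Local Notation w k := (iter k (bracket a) b2).
Local Notation rk i y := (\rank (spanat (D i) y)).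

Lemma svf_D i e : e \in D i -> svf e.
Proof.
by move=> /D_memP [k [_ [] ->]]; apply: svf_iter.
Qed.

Lemma memD_sub i e y : e \in D i -> (e y <= spanat (D i.+1) y)%MS.
Proof.
move=> eD; apply: submx_trans (D_mono _ _ _ _ _); exact: mem_span.
Qed.

Lemma stall_step (U : set pt) j x0 : open U -> U x0 ->
  (forall y, U y -> rk j.+1 y = rk j.+1 x0) ->
  (rk j.+1 x0 <= rk j x0 + 1)%N ->
  (rk j.+2 x0 <= rk j.+1 x0 + 1)%N.
Proof.
move=> oU Ux0 cst grow.
have [uD wD] := D_mem a b1 b2 (ltnSn j).
have Dsucc y := D_succ a b1 b2 j y.
pose L := D j.
have [xi [eta [Hxe Hr]]] : exists xi eta, ((xi = u j /\ eta = w j) \/ (xi = w j /\ eta = u j)) /\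
   \rank (spanat (L ++ [:: xi]) x0) = rk j.+1 x0.
  have sub1 e : e \in D j.+1 -> (spanat (L ++ [:: e]) x0 <= spanat (D j.+1) x0)%MS.
    move=> eD; apply: span_sub => v /mem_catP [vL|].
      exact: memD_sub.
    by rewrite inE => /eqP ->; apply: mem_span.
  case: (boolP (u j x0 <= spanat L x0)%MS) => uL.
    exists (w j), (u j); split; first by right.
    apply: eq_rank; first exact: sub1.
    apply: submx_trans (proj1 (andP (Dsucc x0))) _.
    apply: span_sub => v /mem_catP [vL|/mem2P [] ->].
    - by apply: mem_span; apply: mem_catL.
    - exact: submx_trans uL (span_catl _ _ _).
    - by apply: mem_span; apply: mem_catR; rewrite inE.
  exists (u j), (w j); split; first by left.
  apply/eqP; rewrite eqn_leq mxrankS ?sub1 //=.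
  apply: leq_trans grow _; rewrite addn1.
  have sLE : (spanat L x0 <= spanat (L ++ [:: u j]) x0)%MS by exact: span_catl.
  rewrite ltn_neqAle mxrankS // andbT.
  apply: contra uL => /eqP E.
  have : (spanat (L ++ [:: u j]) x0 <= spanat L x0)%MS.
    by rewrite -(mxrank_leqif_sup sLE).2 E.
  apply: submx_trans; apply: mem_span; apply: mem_catR; rewrite inE.
  exact: eqxx.
have xiD : xi \in D j.+1 by case: Hxe => [][-> _].
have etaD : eta \in D j.+1 by case: Hxe => [][_ ->].
pose E := L ++ [:: xi].
have sE e : e \in E -> svf e.
  by move=> /mem_catP [eL|]; [apply: svf_D eL|rewrite inE => /eqP ->; apply: svf_D xiD].
have ED y : (spanat E y <= spanat (D j.+1) y)%MS.
  apply: span_sub => v /mem_catP [vL|]; first exact: memD_sub.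
  by rewrite inE => /eqP ->; apply: mem_span.
have Hnear : \forall y \near x0,
    (\rank (spanat E y) <= \rank (spanat E x0))%N /\ (eta y <= spanat E y)%MS.
  have nU : \forall y \near x0, U y by apply: open_nbhs_nbhs; split.
  apply: filterS2 nU (rank_lsc x0 sE) => y Uy lsc.
  have r1 : (\rank (spanat E y) <= \rank (spanat E x0))%N.
    by rewrite Hr -(cst y Uy); apply: mxrankS.
  split => //.
  apply: submx_trans (mem_span y etaD) _.
  rewrite -(mxrank_leqif_sup (ED y)).2 eqn_leq mxrankS //=.
  by rewrite (cst y Uy) -Hr.
have Hb := stall_core sE sa (svf_D etaD) Hnear.
have bound : (spanat (D j.+2) x0 <= spanat (D j.+1) x0 + bracket a xi x0)%MS.
  apply: submx_trans (proj1 (andP (D_succ a b1 b2 j.+1 x0))) _.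
  apply: span_sub => v /mem_catP [vD|/mem2P [] ->].
  - by apply: submx_trans (addsmxSl _ _); apply: mem_span.
  - rewrite iterS; case: Hxe => [][E1 E2]; rewrite -?E1 -?E2.
      exact: addsmxSr.
    apply: submx_trans Hb _.
    apply: span_sub => z /mem_catP [/mem_catP [vL|]|/mapP [v' /mem_catP [v'L|v'x] ->]].
    + by apply: submx_trans (addsmxSl _ _); apply: memD_sub.
    + by rewrite inE => /eqP ->; apply: submx_trans (addsmxSl _ _); apply: mem_span.
    + apply: submx_trans (addsmxSl _ _); apply: submx_trans (adD_sub a b1 b2 j x0).
      by apply: mem_span; apply: map_f.
    + by move: v'x; rewrite inE => /eqP ->; exact: addsmxSr.
  - rewrite iterS; case: Hxe => [][E1 E2]; rewrite -?E1 -?E2; last exact: addsmxSr.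
    apply: submx_trans Hb _.
    apply: span_sub => z /mem_catP [/mem_catP [vL|]|/mapP [v' /mem_catP [v'L|v'x] ->]].
    + by apply: submx_trans (addsmxSl _ _); apply: memD_sub.
    + by rewrite inE => /eqP ->; apply: submx_trans (addsmxSl _ _); apply: mem_span.
    + apply: submx_trans (addsmxSl _ _); apply: submx_trans (adD_sub a b1 b2 j x0).
      by apply: mem_span; apply: map_f.
    + by move: v'x; rewrite inE => /eqP ->; exact: addsmxSr.
apply: leq_trans (rank_le_adds bound) _.
by rewrite leq_add2l; apply: rank_leq_row.
Qed.

End Stall.

Section Helpers.
Variables (R : realType) (n : nat).

Lemma sub_deltas (v : 'rV[R]_n) m (S : 'M[R]_(m, n)) L :
  (forall k : 'I_n, (k < L)%N -> v 0 k = 0) ->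
  (forall k : 'I_n, (L <= k)%N -> ((delta_mx 0 k : 'rV[R]_n) <= S)%MS) -> (v <= S)%MS.
Proof.
move=> v0 dS; rewrite (row_sum_delta v); apply: summx_sub => k _.
case: (ltnP k L) => kL; first by rewrite v0 // scale0r sub0mx.
by apply: scalemx_sub; apply: dS.
Qed.

Lemma delta_sub (v : 'rV[R]_n) m (S : 'M[R]_(m, n)) (K : 'I_n) :
  (v <= S)%MS -> v 0 K != 0 -> (forall k : 'I_n, (k < K)%N -> v 0 k = 0) ->
  (forall k : 'I_n, (K < k)%N -> ((delta_mx 0 k : 'rV[R]_n) <= S)%MS) -> ((delta_mx 0 K : 'rV[R]_n) <= S)%MS.
Proof.
move=> vS nz v0 dS.
have E : v = v 0 K *: delta_mx 0 K + \sum_(k | k != K) v 0 k *: delta_mx 0 k.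
  by rewrite {1}(row_sum_delta v) (bigD1 K).
have rest : ((\sum_(k | k != K) v 0 k *: (delta_mx 0 k : 'rV[R]_n))%R <= S)%MS.
  apply: summx_sub => k kK.
  case: (ltngtP k K) => [lt|gt|eq].
  - by rewrite v0 // scale0r sub0mx.
  - by apply: scalemx_sub; apply: dS.
  - by move: kK; rewrite (val_inj eq) eqxx.
have : (v 0 K *: (delta_mx 0 K : 'rV[R]_n) <= S)%MS.
  have -> : v 0 K *: delta_mx 0 K = v - \sum_(k | k != K) v 0 k *: delta_mx 0 k.
    by rewrite {2}E addrK.
  by apply: addmx_sub => //; rewrite -scaleN1r; apply: scalemx_sub.
move/(scalemx_sub (v 0 K)^-1); rewrite scalerA mulVf // scale1r //.
Qed.

Lemma coordvf_delta (K : 'I_n) y : @coordvf R n K.+1 y = delta_mx 0 K.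
Proof. by apply/rowP => k; rewrite !mxE eqSS. Qed.

End Helpers.

Section Main.
Variables (R : realType) (n k1 k2 : nat) (aa bb : nat -> pt R n -> R) (U : set (pt R n)) (p : nat).
Hypothesis k2pos : (1 <= k2)%N.
Hypothesis k12n : (k1 + k2 <= n)%N.
Hypothesis saa : forall l, (k1 + k2 <= l < n)%N -> smooth (aa l).
Hypothesis sbb : forall l, (k1 + k2 <= l < n)%N -> smooth (bb l).
Hypothesis dep : forall l, (k1 + k2 <= l < n)%N -> forall x y : pt R n,
     (forall j, (1 <= j <= l.+1)%N -> zc x j = zc y j) -> aa l x = aa l y.
Hypothesis oU : open U.

Local Notation a := (gtf_a k1 k2 aa).
Local Notation b1 := (gtf_b1 k1 k2 bb).
Local Notation b2 := (@coordvf R n n).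
Local Notation D := (Dseq a b1 b2).
Local Notation u k := (iter k (bracket a) b1).
Local Notation w k := (iter k (bracket a) b2).
Local Notation rk i y := (\rank (spanat (D i) y)).

Hypothesis crank : forall i, (i <= p.+1)%N -> forall x y, U x -> U y -> rk i x = rk i y.
Hypothesis rp : forall y, U y -> rk p.+1 y = (rk p y + 2)%N.

Lemma sva : svf a. Proof. exact: svf_gtf_a. Qed.
Lemma svb1 : svf b1. Proof. exact: svf_gtf_b1. Qed.
Lemma svb2 : svf b2. Proof. exact: svf_coordvf. Qed.

Lemma rk_succ j y : rk j.+1 y = \rank (spanat (D j ++ [:: u j; w j]) y).
Proof. by have /andP [h1 h2] := D_succ a b1 b2 j y; apply: eq_rank. Qed.

Lemma growth j y : (j <= p)%N -> U y -> ~~ (w j y <= spanat (D j) y)%MS.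
Proof.
move=> jp Uy; apply/negP => wD.
have g0 : (rk j.+1 y <= rk j y + 1)%N by rewrite rk_succ; apply: rank_cat2_stall.
suff H : forall d, (j + d <= p)%N -> (rk (j + d).+1 y <= rk (j + d) y + 1)%N.
  have := H (p - j)%N; rewrite subnKC // rp //; lia.
elim=> [|d IH] jd; first by rewrite addn0.
rewrite addnS; apply: (stall_step sva svb1 svb2 oU Uy).
  move=> z Uz; apply: crank => //; lia.
by apply: IH; lia.
Qed.

Lemma chain i y : (i <= p.+1)%N -> U y ->
  (k1 <= n - i)%N /\ forall K : 'I_n, (n - i <= K)%N -> ((delta_mx 0 K : 'rV[R]_n) <= spanat (D i) y)%MS.
Proof.
move=> ip Uy; elim: i ip => [|i IH] ip.
  split; first lia.
  by move=> K; rewrite subn0 => le; move: (ltn_ord K); lia.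
have [IH1 IH2] := IH (ltnW ip).
have jp : (i <= p)%N by lia.
have ng := growth jp Uy.
have wsub : (w i y <= spanat (D i.+1) y)%MS.
  by apply: mem_span; have [] := D_mem a b1 b2 (ltnSn i).
have Dmono : (spanat (D i) y <= spanat (D i.+1) y)%MS := D_mono a b1 b2 i y.
have lt1 : (k1 < n - i)%N.
  rewrite ltnNge; apply: contra ng => le.
  apply: (sub_deltas (L := (n - i)%N)) => [k kL|k kL]; last exact: IH2.
  apply: (w_struct k2pos k12n saa dep); right; lia.
have K0lt : (n - i.+1 < n)%N by lia.
pose K0 := Ordinal K0lt.
have c0 : w i y 0 K0 != 0.
  apply: contra ng => /eqP c.
  apply: (sub_deltas (L := (n - i)%N)) => [k kL|k kL]; last exact: IH2.
  case: (ltnP k K0) => kK.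
    apply: (w_struct k2pos k12n saa dep); left; move: kK => /=; lia.
  have -> : k = K0 by apply: val_inj => /=; move: kK => /=; lia.
  exact: c.
split; first lia.
move=> K le.
case: (ltnP K0 K) => KK.
  apply: submx_trans (IH2 K _) Dmono; move: KK => /=; lia.
have -> : K = K0 by apply: val_inj => /=; move: KK => /=; lia.
apply: (delta_sub wsub c0).
  move=> k kK; apply: (w_struct k2pos k12n saa dep); left; move: kK => /=; lia.
move=> k kK; apply: submx_trans (IH2 k _) Dmono; move: kK => /=; lia.
Qed.

End Main.

Unset Implicit Arguments.

Theorem lemma2 (R : realType) (n k1 k2 : nat) (aa bb : nat -> pt R n -> R)
  (U : set (pt R n)) (p : nat) :
  (1 <= k1)%N -> (1 <= k2)%N -> (k1 + k2 <= n)%N ->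
  (* smoothness and triangular dependence of a^l, b^l, l = k1+k2 .. n-1 *)
  (forall l, (k1 + k2 <= l < n)%N -> smooth (aa l) /\ smooth (bb l)) ->
  (forall l, (k1 + k2 <= l < n)%N -> forall x y : pt R n,
     (forall j, (1 <= j <= l.+1)%N -> zc x j = zc y j) ->
     aa l x = aa l y /\ bb l x = bb l y) ->
  (* local at generic points: U is a nonempty open set *)
  open U -> (exists x0, U x0) ->
  ((k1 + k2 < n)%N -> forall x, U x -> bb (k1 + k2) x != 0) ->
  (forall l, (k1 + k2 <= l < n)%N -> forall x, U x ->
     partialz l.+1 (aa l) x != 0 \/ partialz l.+1 (bb l) x != 0) ->
  let a := gtf_a k1 k2 aa in
  let b1 := gtf_b1 k1 k2 bb in
  let b2 := @gtf_b2 R n in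
  let D := Dseq a b1 b2 in
  (1 <= p)%N ->
  (* distributions have locally constant rank *)
  (forall i, (i <= p.+1)%N -> forall x y, U x -> U y ->
     rankat (D i) x = rankat (D i) y) ->
  (forall i, (1 <= i <= p)%N -> involutive_on (D i) U) ->
  ~ involutive_on (D p.+1) U ->
  (forall x, U x -> (spanat (D p.-1) x <= spanat (D p) x)%MS /\
                    (spanat (D p) x <= spanat (D p.+1) x)%MS /\
                    rankat (D p) x = (rankat (D p.-1) x + 2)%N /\
                    rankat (D p.+1) x = (rankat (D p) x + 2)%N) ->
  ~ subset_cauchy (D p) (D p.+1) U ->
  (forall x, U x -> (spanat (adD a (D p.-1)) x <= spanat (D p) x)%MS) ->
  (forall x, U x -> (spanat (D p.+1) x == spanat (D p ++ adD a (D p)) x)%MS) ->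
  let v1 := iter p.-1 (bracket a) b1 in
  let v2 := @coordvf R n (n - p.-1) in
  let Q := fun al1 al2 : R => fun x =>
     al1 ^+ 2 *: bracket v1 (bracket v1 a) x
     + (2 * al1 * al2) *: bracket v1 (bracket v2 a) x
     + al2 ^+ 2 *: bracket v2 (bracket v2 a) x in
  let vc := fun x => 0 *: v1 x + 1 *: v2 x in
  forall x, U x ->
    (spanat (D p) x == spanat (D p.-1 ++ [:: v1; v2]) x)%MS /\
    (Q 0 1 x <= spanat (D p.+1) x)%MS /\
    vc = @coordvf R n (n - p.-1) /\
    (vc x <= spanat (D p) x)%MS /\ ~~ (vc x <= spanat (D p.-1) x)%MS.
Proof.
move=> k1pos k2pos k12n sm dep oU [x0 Ux0] bnz pnz a b1 b2 D p1 crank inv ninv ranks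
  ncauchy adsub Dp1 v1 v2 Q vc x Ux.
have saa l (h : (k1 + k2 <= l < n)%N) : smooth (aa l) := (sm l h).1.
have sbb l (h : (k1 + k2 <= l < n)%N) : smooth (bb l) := (sm l h).2.
have depa l (h : (k1 + k2 <= l < n)%N) x1 y1 H : aa l x1 = aa l y1 := (dep l h x1 y1 H).1.
have rp y : U y -> \rank (spanat (D p.+1) y) = (\rank (spanat (D p) y) + 2)%N.
  by move=> Uy; have [_ [_ [_ E]]] := ranks y Uy; exact: E.
have G := growth k2pos k12n saa sbb oU crank rp.
have C := chain k2pos k12n saa sbb depa oU crank rp.
have WS := w_struct k2pos k12n saa depa.
have sa : svf a by exact: svf_gtf_a.
have sb1 : svf b1 by exact: svf_gtf_b1.
have sv2 : svf v2 by exact: svf_coordvf.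
have [p' Ep] : exists p', p = p'.+1 by exists p.-1; rewrite prednK.
subst p.
have [C1 _] := C p'.+1 x (ltnW (ltnSn _)) Ux.
have Klt : (n - p'.+1 < n)%N by lia.
pose K := Ordinal Klt.
have EK : (n - p')%N = K.+1 by rewrite /=; lia.
have v2E y : v2 y = delta_mx 0 K by rewrite /v2 EK coordvf_delta.
have vcE : vc = v2 by apply: boolp.funext => y; rewrite /vc scale0r add0r scale1r.
have C4 : (vc x <= spanat (D p'.+1) x)%MS.
  by rewrite vcE v2E; apply: (C p'.+1 x (ltnW (ltnSn _)) Ux).2 => /=.
have Cp' := (C p' x (ltnW (ltnW (ltnSn _))) Ux).2.
have wsub : (forall k : 'I_n, (K <= k)%N -> ((delta_mx 0 k : 'rV[R]_n) <= spanat (D p' ++ [:: v1; v2]) x)%MS) ->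
    (iter p' (bracket a) b2 x <= spanat (D p' ++ [:: v1; v2]) x)%MS.
  move=> H; apply: (sub_deltas (L := K)) => // k kK.
  by apply: WS; left; move: kK => /=; lia.
split.
  apply/andP; split.
    apply: submx_trans (proj1 (andP (D_succ a b1 b2 p' x))) _.
    apply: span_sub => e /mem_catP [eD|/mem2P [] ->].
    - by apply: mem_span; apply: mem_catL.
    - by apply: mem_span; apply: mem_catR; apply: mem2l.
    - apply: wsub => k Kk.
      case: (ltngtP K k) => [lt|lt'|eq].
      + by apply: submx_trans (Cp' k _) (span_catl _ _ _); move: lt => /=; lia.
      + by move: Kk; rewrite leqNgt lt'.
      have -> : k = K by apply: ord_inj; lia.
      by rewrite -(v2E x); apply: mem_span; apply: mem_catR; apply: mem2r.
  apply: span_sub => e /mem_catP [eD|/mem2P [] ->].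
  - by apply: submx_trans (D_mono a b1 b2 p' x); apply: mem_span.
  - by apply: mem_span; have [] := D_mem a b1 b2 (ltnSn p').
  - by rewrite -vcE.
split.
  have QE : Q 0 1 x = bracket v2 (bracket v2 a) x.
    have gen (B1 B2 B3 : 'rV[R]_n) : (0:R) ^+ 2 *: B1 + (2 * 0 * 1) *: B2 + (1:R) ^+ 2 *: B3 = B3.
      by rewrite expr2 mul0r mulr0 mul0r !scale0r !add0r expr1n scale1r.
    exact: gen.
  rewrite QE.
  apply: (sub_deltas (L := (n - p'.+2)%N)) => k kL; last first.
    by apply: (C p'.+2 x (leqnn _) Ux).2.
  have sb := svf_bracket sv2 sa.
  rewrite bracket_comp' //.
  rewrite (derive_const_dir (f := fun y => v2 y 0 k)) // subr0.
  apply: derive_zero_fun => z.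
  rewrite bracket_comp' // (derive_const_dir (f := fun y => v2 y 0 k)) // subr0 v2E.
  have P0 := partial_a0 k2pos k12n depa (k := k) (i := K) (or_introl _).
  have := congr1 (fun F => F z) (P0 _); rewrite /partial /= => -> //.
  by move: kL => /=; lia.
split; first exact: vcE.
split; first exact: C4.
rewrite vcE v2E; apply/negP => dK.
have := G p' x (ltnW (ltnSn _)) Ux; apply/negP; apply/negPn.
apply: (sub_deltas (L := K)) => k kK.
  by apply: WS; left; move: kK => /=; lia.
case: (ltngtP K k) => [lt|lt'|eq].
- by apply: Cp'; move: lt => /=; lia.
- by move: kK; rewrite leqNgt lt'.
by have -> : k = K by apply: ord_inj; lia.
Qed.
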